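(* Let $n\ge 3$. For the $n$-dimensional rigid body with a flat face rubber-rolling on a sphere (as in the context), the reduced equations of motion on $T^*\mathbb R^{n-1}$ possess an invariant measure of the form $\exp(\sigma(s))\,\nu$ with $\sigma\in C^\infty(\mathbb R^{n-1})$, and the system admits a Chaplygin Hamiltonisation, provided one of the following holds: (C1) $\mathbb J=\mathrm{diag}(J_1,J_2,\dots,J_n)$ and $a=0$; (C2) $\mathbb J=\mathrm{diag}(J_1,\dots,J_1,J_n)$.
   Context: Fix $n\ge3$, $R>0$, $a\in\mathbb R$, $m>0$, symmetric positive definite $n\times n$ matrix $\mathbb J$. Configuration space $Q=\mathbb R^{n-1}\times SO(n)\ni((X_1,\dots,X_{n-1}),g)$, $X=(X_1,\dots,X_{n-1},R+a)^T$, $\Omega=g^{-1}\dot g\in\mathfrak{so}(n)$, $E_1,\dots,E_n$ the standard basis of $\mathbb R^n$. Lagrangian $L=\frac12(\mathbb J\Omega+\Omega\mathbb J,\Omega)_\kappa+\frac m2\|\dot X+\Omega X\|^2$ with $(\xi,\eta)_\kappa=-\frac12\mathrm{tr}(\xi\eta)$, $\dot X_n=0$. Constraints: $\dot X=-R\Omega E_n$ and $\Omega_{\mu\nu}=0$ for $1\le\mu,\nu\le n-1$, defining a distribution $\mathcal D$. The action $h\cdot(X,g)=(X,hg)$ of $SO(n)$ makes this an $SO(n)$-Chaplygin system with shape space $S=\mathbb R^{n-1}$, coordinates $s_i=X_i$, $r=n-1$. Its reduced equations on $T^*S$ are $\dot s_i=\partial H/\partial p_i$, $\dot p_i=-\partial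 H/\partial s_i-\sum_{j,k}C_{ij}^kp_k\partial H/\partial p_j$, where $H=\frac12\sum K^{ij}p_ip_j$, $K_{ij}=\langle\mathrm{hor}_q\partial_{s_i},\mathrm{hor}_q\partial_{s_j}\rangle$ (horizontal lift into $\mathcal D_q$, metric given by $L$), $K^{ij}$ its inverse, and $C_{ij}^k=\sum_lK^{kl}\langle[\mathrm{hor}_q\partial_{s_i},\mathrm{hor}_q\partial_{s_j}],\mathrm{hor}_q\partial_{s_l}\rangle$. $\nu=ds_1\cdots ds_{n-1}dp_1\cdots dp_{n-1}$ is the Liouville volume. A Chaplygin Hamiltonisation is a smooth $\phi:S\to\mathbb R$ such that under $dt=e^{-\phi(s)}d\tau$, $p_i=e^{-\phi(s)}\tilde p_i$ the reduced equations become $ds_i/d\tau=\partial\tilde H/\partial\tilde p_i$, $d\tilde p_i/d\tau=-\partial\tilde H/\partial s_i$ with $\tilde H(s,\tilde p)=H(s,e^{-\phi(s)}\tilde p)$. *)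

(* Defs.v *)
From Stdlib Require Import Reals ClassicalEpsilon.
Open Scope R_scope.

(* Vectors of R^k are functions nat -> R (only indices < k matter);    *)
(* n x n matrices are functions nat -> nat -> R.  Index n-1 plays the  *)
(* role of E_n in the paper.                                           *)
Definition vec := nat -> R.
Definition mat := nat -> nat -> R.

Fixpoint rsum (k : nat) (f : nat -> R) : R :=
  match k with O => 0 | S k' => rsum k' f + f k' end.

Definition delta (i j : nat) : R := if Nat.eqb i j then 1 else 0.
Definition idm : mat := fun i j => delta i j.
Definition mmul (n : nat) (A B : mat) : mat :=
  fun i j => rsum n (fun l => A i l * B l j).
Definition madd (A B : mat) : mat := fun i j => A i j + B i j.
Definition mtr (A : mat) : mat := fun i j => A j i.
Definition trace (n : nat) (A : mat) : R := rsum n (fun i => A i i).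
Definition mvec (n : nat) (A : mat) (v : vec) : vec :=
  fun i => rsum n (fun j => A i j * v j).
Definition vadd (u v : vec) : vec := fun i => u i + v i.
Definition vscale (c : R) (v : vec) : vec := fun i => c * v i.
Definition dot (n : nat) (u v : vec) : R := rsum n (fun i => u i * v i).

Definition kappa (n : nat) (A B : mat) : R := - (1/2) * trace n (mmul n A B).

Definition sym_pd (n : nat) (J : mat) : Prop :=
  (forall i j, (i < n)%nat -> (j < n)%nat -> J i j = J j i) /\
  (forall v : vec, (exists i, (i < n)%nat /\ v i <> 0) ->
     0 < rsum n (fun i => rsum n (fun j => v i * J i j * v j))).

Definition is_diag (n : nat) (J : mat) : Prop :=
  forall i j, (i < n)%nat -> (j < n)%nat -> i <> j -> J i j = 0.

Definition Dr (f : R -> R) (x : R) : R :=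
  epsilon (inhabits 0) (fun l => derivable_pt_lim f x l).

Definition upd (x : vec) (i : nat) (t : R) : vec :=
  fun j => if Nat.eqb j i then t else x j.

Definition pd (i : nat) (f : vec -> R) (x : vec) : R :=
  Dr (fun t => f (upd x i (x i + t))) 0.

Definition has_pd (i : nat) (f : vec -> R) : Prop :=
  forall x, exists l, derivable_pt_lim (fun t => f (upd x i (x i + t))) 0 l.

Definition contk (k : nat) (f : vec -> R) : Prop :=
  forall x eps, 0 < eps -> exists del, 0 < del /\
    forall y, (forall i, (i < k)%nat -> Rabs (y i - x i) < del) ->
              (forall i, (k <= i)%nat -> y i = x i) ->
              Rabs (f y - f x) < eps.

Fixpoint Cm (k m : nat) (f : vec -> R) : Prop :=
  contk k f /\
  match m with
  | O => True
  | S m' => forall i, (i < k)%nat -> has_pd i f /\ Cm k m' (pd i f)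
  end.

Definition smooth (k : nat) (f : vec -> R) : Prop := forall m, Cm k m f.

Definition pds (i : nat) (F : vec -> vec -> R) (s p : vec) : R :=
  Dr (fun t => F (upd s i (s i + t)) p) 0.
Definition pdp (i : nat) (F : vec -> vec -> R) (s p : vec) : R :=
  Dr (fun t => F s (upd p i (p i + t))) 0.

(* Ambient space of Q = R^{n-1} x SO(n): ST = R^{n-1} x R^{n x n};     *)
(* a point q = (s, g), a tangent vector v = (Xdot, gdot).              *)
Definition ST := (vec * mat)%type.

Section Rubber.
Variables (n : nat) (J : mat) (m Rr a : R).

Definition r : nat := (n - 1)%nat.

Definition Xfull (s : vec) : vec :=
  fun i => if Nat.ltb i r then s i else if Nat.eqb i r then Rr + a else 0.
Definition Vfull (u : vec) : vec := fun i => if Nat.ltb i r then u i else 0.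

(* the kinetic-energy metric on T_q Q determined by L (so that <v,v> = 2L),
   with Omega = g^{-1} gdot = g^T gdot on SO(n) *)
Definition metric (q v w : ST) : R :=
  let g := snd q in
  let X := Xfull (fst q) in
  let O1 := mmul n (mtr g) (snd v) in
  let O2 := mmul n (mtr g) (snd w) in
  kappa n (madd (mmul n J O1) (mmul n O1 J)) O2
  + m * dot n (vadd (Vfull (fst v)) (mvec n O1 X))
              (vadd (Vfull (fst w)) (mvec n O2 X)).

Definition in_D (q v : ST) : Prop :=
  let Om := mmul n (mtr (snd q)) (snd v) in
  (forall i, (i < n)%nat -> Vfull (fst v) i = - Rr * Om i r) /\
  (forall i j, (i < r)%nat -> (j < r)%nat -> Om i j = 0).

(* Omega-part of the horizontal lift of d/ds_i: the unique element of so(n)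
   with Omega_{mu nu} = 0 (mu,nu<n) and -R Omega E_n = E_i, i.e.
   Omega = (1/R)(E_n E_i^T - E_i E_n^T). *)
Definition Omh (i : nat) : mat :=
  fun p q => / Rr * (delta p r * delta q i - delta p i * delta q r).

(* horizontal lift of d/ds_i, as a (left-invariant in g) vector field on the ambient space *)
Definition hor (i : nat) (q : ST) : ST :=
  (fun j => delta j i, mmul n (snd q) (Omh i)).

Definition shift (x : ST) (e : R) (v : ST) : ST :=
  (fun j => fst x j + e * fst v j, fun p q => snd x p q + e * snd v p q).

Definition bracket (V W : ST -> ST) (x : ST) : ST :=
  (fun j => Dr (fun e => fst (W (shift x e (V x))) j) 0
          - Dr (fun e => fst (V (shift x e (W x))) j) 0,
   fun p q => Dr (fun e => snd (W (shift x e (V x))) p q) 0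
            - Dr (fun e => snd (V (shift x e (W x))) p q) 0).

(* representative point of the fibre over s (everything is SO(n)-invariant) *)
Definition base (s : vec) : ST := (s, idm).

Definition Kmat (s : vec) : mat :=
  fun i j => metric (base s) (hor i (base s)) (hor j (base s)).

Definition is_inv (k : nat) (A M : mat) : Prop :=
  forall i j, (i < k)%nat -> (j < k)%nat -> rsum k (fun l => A i l * M l j) = delta i j.

Definition Kinv (s : vec) : mat :=
  epsilon (inhabits (fun _ _ => 0)) (fun M => is_inv r (Kmat s) M).

Definition Cijk (s : vec) (i j k : nat) : R :=
  rsum r (fun l => Kinv s k l *
    metric (base s) (bracket (hor i) (hor j) (base s)) (hor l (base s))).

Definition Ham (s p : vec) : R :=
  1/2 * rsum r (fun i => rsum r (fun j => Kinv s i j * p i * p j)).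

Definition sdot (s p : vec) (i : nat) : R := pdp i Ham s p.
Definition pdot (s p : vec) (i : nat) : R :=
  - pds i Ham s p
  - rsum r (fun j => rsum r (fun k => Cijk s i j k * p k * sdot s p j)).

(* exp(sigma(s)) nu is invariant: Liouville equation div(exp(sigma) Y) = 0 *)
Definition invariant_measure (sigma : vec -> R) : Prop :=
  forall s p : vec,
    rsum r (fun i =>
      pds i (fun s' p' => exp (sigma s') * sdot s' p' i) s p
    + pdp i (fun s' p' => exp (sigma s') * pdot s' p' i) s p) = 0.

(* Chaplygin Hamiltonisation: dt = exp(-phi) dtau, p = exp(-phi) pt turns the
   reduced equations into Hamilton's equations for Ht(s,pt) = H(s, exp(-phi) pt).
   ds/dtau = exp(-phi) sdot, dpt/dtau = (sum_j d_j phi sdot_j) p_i + pdot_i. *)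
Definition chaplygin_hamiltonisation (phi : vec -> R) : Prop :=
  smooth r phi /\
  let Ht := fun s' pt' => Ham s' (vscale (exp (- phi s')) pt') in
  forall s pt : vec,
    let p := vscale (exp (- phi s)) pt in
    (forall i, (i < r)%nat -> exp (- phi s) * sdot s p i = pdp i Ht s pt) /\
    (forall i, (i < r)%nat ->
       rsum r (fun j => pd j phi s * sdot s p j) * p i + pdot s p i
       = - pds i Ht s pt).

End Rubber.

(* Main.v *)
Require Import Defs.
From Stdlib Require Import Reals Lra Lia FunctionalExtensionality ClassicalEpsilon.
Open Scope R_scope.

Lemma rsum_ext k f g : (forall i, (i < k)%nat -> f i = g i) -> rsum k f = rsum k g.
Proof. induction k; simpl; intros H; auto. rewrite IHk by (intros; apply H; lia). rewrite H by lia; auto. Qed.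

Lemma rsum_plus k f g : rsum k (fun i => f i + g i) = rsum k f + rsum k g.
Proof. induction k; simpl; [ring|rewrite IHk; ring]. Qed.

Lemma rsum_minus k f g : rsum k (fun i => f i - g i) = rsum k f - rsum k g.
Proof. induction k; simpl; [ring|rewrite IHk; ring]. Qed.

Lemma rsum_scal k c f : rsum k (fun i => c * f i) = c * rsum k f.
Proof. induction k; simpl; [ring|rewrite IHk; ring]. Qed.

Lemma rsum_0 k : rsum k (fun _ => 0) = 0.
Proof. induction k; simpl; [ring|rewrite IHk; ring]. Qed.

Lemma rsum_swap a b (f : nat -> nat -> R) :
  rsum a (fun i => rsum b (fun j => f i j)) = rsum b (fun j => rsum a (fun i => f i j)).
Proof. induction a; simpl. rewrite rsum_0; auto. rewrite IHa. rewrite <- rsum_plus. auto. Qed.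

Lemma delta_sym i j : delta i j = delta j i.
Proof. unfold delta. rewrite Nat.eqb_sym. auto. Qed.
Lemma delta_refl i : delta i i = 1.
Proof. unfold delta. rewrite Nat.eqb_refl. auto. Qed.
Lemma delta_neq i j : i <> j -> delta i j = 0.
Proof. intros H. unfold delta. destruct (Nat.eqb_spec i j); [lia|auto]. Qed.

Lemma rsum_delta k i f : (i < k)%nat -> rsum k (fun l => delta l i * f l) = f i.
Proof.
  induction k; intros H; simpl. lia.
  destruct (Nat.eq_dec i k) as [->|Hne].
  - rewrite delta_refl. rewrite (rsum_ext _ _ (fun _ => 0)). rewrite rsum_0; ring.
    intros l Hl. rewrite delta_neq by lia. ring.
  - rewrite IHk by lia. rewrite delta_neq by lia. ring.
Qed.

Lemma rsum_delta2 k i j A B : (i < k)%nat -> (j < k)%nat ->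
  rsum k (fun l => delta l i * A l + delta l j * B l) = A i + B j.
Proof. intros. rewrite rsum_plus, !rsum_delta; auto. Qed.

Lemma rsum_antisym k (f : nat -> nat -> R) :
  (forall i j, (i < k)%nat -> (j < k)%nat -> f i j = - f j i) ->
  rsum k (fun i => rsum k (fun j => f i j)) = 0.
Proof.
  intros H. assert (E: rsum k (fun i => rsum k (fun j => f i j)) = - rsum k (fun i => rsum k (fun j => f i j))).
  { rewrite rsum_swap at 1. rewrite <- (Rmult_1_l (rsum k (fun i : nat => rsum k (fun j : nat => f i j)))).
    rewrite Ropp_mult_distr_l, <- rsum_scal. apply rsum_ext. intros j Hj.
    rewrite <- rsum_scal. apply rsum_ext. intros i Hi. rewrite H by auto. ring. }
  lra.
Qed.

Lemma rsum_abs k f : Rabs (rsum k f) <= rsum k (fun i => Rabs (f i)).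
Proof. induction k; simpl. rewrite Rabs_R0; lra. eapply Rle_trans. apply Rabs_triang. lra. Qed.

Lemma rsum_le k f g : (forall i, (i < k)%nat -> f i <= g i) -> rsum k f <= rsum k g.
Proof. induction k; simpl; intros H. lra. assert (f k <= g k) by (apply H; lia). assert (rsum k f <= rsum k g) by (apply IHk; intros; apply H; lia). lra. Qed.

Lemma rsum_nonneg k f : (forall i, (i < k)%nat -> 0 <= f i) -> 0 <= rsum k f.
Proof. intros H. rewrite <- (rsum_0 k). apply rsum_le. auto. Qed.

Lemma Dr_eq f x l : derivable_pt_lim f x l -> Dr f x = l.
Proof.
  intros H. unfold Dr.
  apply (uniqueness_limite f x). apply epsilon_spec. exists l; auto. auto.
Qed.

Lemma D_const c x : derivable_pt_lim (fun _ => c) x 0.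
Proof. apply (derivable_pt_lim_const c x). Qed.
Lemma D_plus f g x a b : derivable_pt_lim f x a -> derivable_pt_lim g x b ->
  derivable_pt_lim (fun t => f t + g t) x (a + b).
Proof. apply derivable_pt_lim_plus. Qed.
Lemma D_mult f g x a b : derivable_pt_lim f x a -> derivable_pt_lim g x b ->
  derivable_pt_lim (fun t => f t * g t) x (a * g x + f x * b).
Proof. apply derivable_pt_lim_mult. Qed.
Lemma D_eqv f x a b : a = b -> derivable_pt_lim f x a -> derivable_pt_lim f x b.
Proof. intros ->; auto. Qed.

Lemma D_lin c d x : derivable_pt_lim (fun t => c + t * d) x d.
Proof.
  eapply D_eqv; [| apply (D_plus (fun _ => c) (fun t => t*d)); [apply D_const | apply (D_mult id (fun _ => d)); [apply derivable_pt_lim_id | apply D_const]]].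
  unfold id; ring.
Qed.
Lemma D_minus f g x a b : derivable_pt_lim f x a -> derivable_pt_lim g x b ->
  derivable_pt_lim (fun t => f t - g t) x (a - b).
Proof. apply derivable_pt_lim_minus. Qed.
Lemma D_div f g x a b : derivable_pt_lim f x a -> derivable_pt_lim g x b -> g x <> 0 ->
  derivable_pt_lim (fun t => f t / g t) x ((a * g x - b * f x) / (g x)²).
Proof. apply derivable_pt_lim_div. Qed.
Lemma D_exp f x a : derivable_pt_lim f x a ->
  derivable_pt_lim (fun t => exp (f t)) x (exp (f x) * a).
Proof. intros H. apply (derivable_pt_lim_comp f exp). auto. apply derivable_pt_lim_exp. Qed.
Lemma D_ext f g x a : (forall t, f t = g t) -> derivable_pt_lim f x a -> derivable_pt_lim g x a.
Proof. intros H. replace g with f; auto. apply functional_extensionality; auto. Qed.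
Lemma D_rsum k (f : nat -> R -> R) d x :
  (forall j, (j < k)%nat -> derivable_pt_lim (f j) x (d j)) ->
  derivable_pt_lim (fun t => rsum k (fun j => f j t)) x (rsum k d).
Proof.
  induction k; intros H; simpl. apply D_const.
  apply D_plus. apply IHk; intros; apply H; lia. apply H; lia.
Qed.

Lemma upd_comp x i t j : upd x i (x i + t) j = x j + t * delta j i.
Proof. unfold upd, delta. destruct (Nat.eqb_spec j i); subst; ring. Qed.

Lemma upd_0 x i : upd x i (x i + 0) = x.
Proof. apply functional_extensionality; intros j. rewrite upd_comp. ring. Qed.

Lemma D_upd x i j : derivable_pt_lim (fun t => upd x i (x i + t) j) 0 (delta j i).
Proof. apply (D_ext (fun t => x j + t * delta j i)). intros; rewrite upd_comp; auto. apply D_lin. Qed.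

Lemma rsum_scal_r k c f : rsum k (fun i => f i * c) = rsum k f * c.
Proof. induction k; simpl; [ring|rewrite IHk; ring]. Qed.

Lemma D_scal c f x d : derivable_pt_lim f x d -> derivable_pt_lim (fun t => c * f t) x (c * d).
Proof. intros H. eapply D_eqv; [|apply (D_mult (fun _ => c) f); [apply D_const|apply H]]. ring. Qed.

Lemma Dr_ext f g x : (forall t, f t = g t) -> Dr f x = Dr g x.
Proof. intros H. replace g with f; auto. apply functional_extensionality; auto. Qed.

Lemma D_qf k (Mt : R -> nat -> nat -> R) (w : R -> vec) dM dw :
  (forall j l, (j < k)%nat -> (l < k)%nat -> derivable_pt_lim (fun t => Mt t j l) 0 (dM j l)) ->
  (forall j, (j < k)%nat -> derivable_pt_lim (fun t => w t j) 0 (dw j)) ->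
  derivable_pt_lim (fun t => rsum k (fun j => rsum k (fun l => Mt t j l * w t j * w t l))) 0
   (rsum k (fun j => rsum k (fun l => dM j l * w 0 j * w 0 l + Mt 0 j l * dw j * w 0 l + Mt 0 j l * w 0 j * dw l))).
Proof.
  intros HM Hw. apply (D_rsum k (fun j t => rsum k (fun l => Mt t j l * w t j * w t l))). intros j Hj.
  apply (D_rsum k (fun l t => Mt t j l * w t j * w t l)). intros l Hl.
  eapply D_eqv; [| apply (D_mult (fun t => Mt t j l * w t j) (fun t => w t l));
     [apply (D_mult (fun t => Mt t j l) (fun t => w t j)); [apply HM; auto | apply Hw; auto] | apply Hw; auto]].
  simpl. ring.
Qed.

Lemma qf_sym_sum k (M : nat -> nat -> R) u w :
  (forall j l, (j < k)%nat -> (l < k)%nat -> M j l = M l j) ->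
  rsum k (fun j => rsum k (fun l => M j l * u j * w l + M j l * w j * u l))
  = 2 * rsum k (fun j => u j * rsum k (fun l => M j l * w l)).
Proof.
  intros HM.
  rewrite (rsum_ext k _ (fun j => rsum k (fun l => M j l * u j * w l) + rsum k (fun l => M j l * w j * u l)))
    by (intros; apply rsum_plus).
  rewrite rsum_plus. rewrite (rsum_swap k k (fun j l => M j l * w j * u l)).
  rewrite <- rsum_plus. rewrite <- rsum_scal. apply rsum_ext. intros j Hj.
  rewrite <- rsum_plus. rewrite <- !rsum_scal. apply rsum_ext. intros l Hl. rewrite (HM l j) by auto. ring.
Qed.

Lemma rsum_const k c : rsum k (fun _ => c) = INR k * c.
Proof. induction k. simpl. ring. simpl rsum. rewrite IHk. rewrite S_INR. ring. Qed.

Definition fP k (al : R) (be : nat -> R) (ga : R) (s : vec) :=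
  al * rsum k (fun l => s l * s l) + rsum k (fun l => be l * s l) + ga.

Lemma pt_bound al be x y del : Rabs (y - x) < del -> del <= 1 ->
  Rabs (al * (y * y) + be * y - (al * (x * x) + be * x)) <= del * (Rabs al * (2 * Rabs x + 1) + Rabs be).
Proof.
  intros H1 H2.
  replace (al * (y * y) + be * y - (al * (x * x) + be * x)) with (al * (y + x) * (y - x) + be * (y - x)) by ring.
  eapply Rle_trans. apply Rabs_triang. rewrite !Rabs_mult.
  assert (Hyx : Rabs (y + x) <= 2 * Rabs x + 1).
  { replace (y + x) with ((y - x) + 2 * x) by ring. eapply Rle_trans. apply Rabs_triang.
    rewrite Rabs_mult, (Rabs_right 2) by lra. lra. }
  assert (0 <= Rabs al) by apply Rabs_pos. assert (0 <= Rabs be) by apply Rabs_pos.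
  assert (0 <= Rabs (y - x)) by apply Rabs_pos. assert (0 <= Rabs (y + x)) by apply Rabs_pos.
  assert (Rabs al * Rabs (y + x) <= Rabs al * (2 * Rabs x + 1)) by (apply Rmult_le_compat_l; auto).
  assert (Rabs al * Rabs (y + x) * Rabs (y - x) <= Rabs al * (2 * Rabs x + 1) * del).
  { apply Rmult_le_compat; try lra. apply Rmult_le_pos; auto. }
  assert (Rabs be * Rabs (y - x) <= Rabs be * del) by (apply Rmult_le_compat_l; lra).
  lra.
Qed.

Lemma fP_cont k al be ga : contk k (fP k al be ga).
Proof.
  intros x eps Heps.
  set (M := rsum k (fun l => Rabs al * (2 * Rabs (x l) + 1) + Rabs (be l))).
  assert (HM : 0 <= M). { apply rsum_nonneg. intros. assert (0 <= Rabs al) by apply Rabs_pos.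
    assert (0 <= Rabs (be i)) by apply Rabs_pos. assert (0 <= Rabs (x i)) by apply Rabs_pos. nra. }
  exists (Rmin 1 (eps / (M + 1))). split.
  { apply Rmin_glb_lt. lra. apply Rdiv_lt_0_compat; lra. }
  intros y Hy _. unfold fP.
  replace (al * rsum k (fun l => y l * y l) + rsum k (fun l => be l * y l) + ga -
     (al * rsum k (fun l => x l * x l) + rsum k (fun l => be l * x l) + ga))
   with (rsum k (fun l => al * (y l * y l) + be l * y l - (al * (x l * x l) + be l * x l)))
   by (rewrite rsum_minus, !rsum_plus, <- !rsum_scal; ring).
  eapply Rle_lt_trans. apply rsum_abs.
  eapply Rle_lt_trans. apply (rsum_le k _ (fun l => Rmin 1 (eps / (M + 1)) * (Rabs al * (2 * Rabs (x l) + 1) + Rabs (be l)))).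
  intros l Hl. apply pt_bound. apply Hy; auto. apply Rmin_l.
  rewrite rsum_scal. fold M.
  assert (Rmin 1 (eps / (M + 1)) <= eps / (M + 1)) by apply Rmin_r.
  assert (Rmin 1 (eps / (M + 1)) * M <= eps / (M + 1) * M) by (apply Rmult_le_compat_r; auto).
  assert (eps / (M + 1) * M < eps).
  { unfold Rdiv. replace (eps * / (M + 1) * M) with (eps * (M / (M + 1))) by (field; lra).
    assert (M / (M + 1) < 1). { apply (Rmult_lt_reg_r (M + 1)). lra. unfold Rdiv. rewrite Rmult_assoc, Rinv_l by lra. lra. }
    nra. }
  lra.
Qed.

Lemma fP_deriv k al be ga x i : (i < k)%nat ->
  derivable_pt_lim (fun t => fP k al be ga (upd x i (x i + t))) 0 (al * (2 * x i) + be i).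
Proof.
  intros Hi. unfold fP.
  apply (D_eqv _ _ (al * (2 * x i) + be i + 0)). ring.
  apply (D_plus (fun t => al * rsum k (fun l => upd x i (x i + t) l * upd x i (x i + t) l) + rsum k (fun l => be l * upd x i (x i + t) l)) (fun _ => ga)).
  2: apply D_const.
  apply D_plus. apply D_scal.
  eapply D_eqv; [| apply (D_rsum k (fun l t => upd x i (x i + t) l * upd x i (x i + t) l) (fun l => delta l i * (2 * x l)))].
  apply rsum_delta; auto.
  intros l Hl. eapply D_eqv; [| apply (D_mult (fun t => upd x i (x i + t) l) (fun t => upd x i (x i + t) l)); apply D_upd].
  rewrite upd_comp. ring.
  eapply D_eqv; [| apply (D_rsum k (fun l t => be l * upd x i (x i + t) l) (fun l => delta l i * be l))].
  apply rsum_delta; auto.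
  intros l Hl. eapply D_eqv; [| apply D_scal, D_upd]. ring.
Qed.

Lemma fP_pd_eq k al be ga i : (i < k)%nat ->
  pd i (fP k al be ga) = fP k 0 (fun l => 2 * al * delta l i) (be i).
Proof.
  intros Hi. apply functional_extensionality; intros x. unfold pd. rewrite (Dr_eq _ _ _ (fP_deriv k al be ga x i Hi)).
  unfold fP. rewrite (rsum_ext k (fun l => 2 * al * delta l i * x l) (fun l => delta l i * (2 * al * x l))) by (intros; ring).
  rewrite rsum_delta by auto. ring.
Qed.

Lemma fP_smooth k al be ga : smooth k (fP k al be ga).
Proof.
  intros mm. revert al be ga. induction mm; intros al be ga; simpl.
  - split; auto. apply fP_cont.
  - split. apply fP_cont. intros i Hi. split.
    + intros x. eexists. apply fP_deriv; auto.
    + rewrite fP_pd_eq by auto. apply IHmm.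
Qed.

Lemma quad_smooth k al : smooth k (fun s => al * rsum k (fun l => s l * s l)).
Proof.
  replace (fun s : vec => al * rsum k (fun l => s l * s l)) with (fP k al (fun _ => 0) 0).
  apply fP_smooth. apply functional_extensionality; intros s. unfold fP.
  rewrite (rsum_ext k (fun l => 0 * s l) (fun _ => 0)) by (intros; ring). rewrite rsum_0. ring.
Qed.

Lemma D_opp f x d : derivable_pt_lim f x d -> derivable_pt_lim (fun t => - f t) x (- d).
Proof. intros H. apply (derivable_pt_lim_opp f x d H). Qed.


Section Model.
Variables (n : nat) (J : mat) (m Rr a : R).
Hypothesis Hn3 : (3 <= n)%nat.
Hypothesis HR : 0 < Rr.
Hypothesis Hm : 0 < m.
Hypothesis Hdiag : is_diag n J.

Notation k := (r n).
Lemma k_lt_n : (k < n)%nat. Proof. unfold r; lia. Qed.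
Lemma lt_k_n i : (i < k)%nat -> (i < n)%nat. Proof. unfold r; lia. Qed.
Lemma lt_n_cases p : (p < n)%nat -> (p < k)%nat \/ p = k. Proof. unfold r; lia. Qed.
Hint Resolve k_lt_n lt_k_n : core.

Lemma diag_l p q : (p < n)%nat -> (q < n)%nat -> J p q = delta q p * J p p.
Proof. intros. destruct (Nat.eq_dec p q). subst. rewrite delta_refl; ring.
  rewrite Hdiag by auto. rewrite delta_neq by auto. ring. Qed.
Lemma diag_r p q : (p < n)%nat -> (q < n)%nat -> J p q = delta p q * J q q.
Proof. intros. destruct (Nat.eq_dec p q). subst. rewrite delta_refl; ring.
  rewrite Hdiag by auto. rewrite delta_neq by auto. ring. Qed.

Lemma mtr_idm_mul B p q : (p < n)%nat -> mmul n (mtr idm) B p q = B p q.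
Proof. intros. unfold mmul, mtr, idm. apply (rsum_delta n p (fun l => B l q)); auto. Qed.
Lemma idm_mul B p q : (p < n)%nat -> mmul n idm B p q = B p q.
Proof. intros. unfold mmul, idm. rewrite <- (rsum_delta n p (fun l => B l q)) by auto.
  apply rsum_ext; intros. rewrite delta_sym; auto. Qed.

Lemma kappa_diag O1 O2 : kappa n (madd (mmul n J O1) (mmul n O1 J)) O2 =
  -(1/2) * rsum n (fun p => rsum n (fun l => (J p p + J l l) * O1 p l * O2 l p)).
Proof.
  unfold kappa, trace, madd, mmul. f_equal. apply rsum_ext; intros p Hp. apply rsum_ext; intros l Hl.
  rewrite (rsum_ext n (fun l0 => J p l0 * O1 l0 l) (fun l0 => delta l0 p * (J p p * O1 l0 l))).
  rewrite (rsum_ext n (fun l0 => O1 p l0 * J l0 l) (fun l0 => delta l0 l * (O1 p l0 * J l l))).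
  rewrite !rsum_delta by auto. ring.
  intros q Hq. rewrite (diag_r q l) by auto. ring.
  intros q Hq. rewrite (diag_l p q) by auto. ring.
Qed.

Lemma metric_eq s u1 G1 u2 G2 H1 H2 :
  (forall p q, (p < n)%nat -> (q < n)%nat -> mmul n (mtr idm) G1 p q = H1 p q) ->
  (forall p q, (p < n)%nat -> (q < n)%nat -> mmul n (mtr idm) G2 p q = H2 p q) ->
  metric n J m Rr a (s, idm) (u1, G1) (u2, G2) =
  -(1/2) * rsum n (fun p => rsum n (fun l => (J p p + J l l) * H1 p l * H2 l p))
  + m * rsum n (fun p => (Vfull n u1 p + rsum n (fun q => H1 p q * Xfull n Rr a s q))
                       * (Vfull n u2 p + rsum n (fun q => H2 p q * Xfull n Rr a s q))).
Proof.
  intros E1 E2. unfold metric. simpl. rewrite kappa_diag. f_equal; f_equal.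
  apply rsum_ext; intros p Hp. apply rsum_ext; intros l Hl. rewrite E1, E2 by auto. auto.
  unfold dot, vadd, mvec. apply rsum_ext; intros p Hp.
  rewrite (rsum_ext n (fun j => mmul n (mtr idm) G1 p j * Xfull n Rr a s j) (fun q => H1 p q * Xfull n Rr a s q)).
  rewrite (rsum_ext n (fun j => mmul n (mtr idm) G2 p j * Xfull n Rr a s j) (fun q => H2 p q * Xfull n Rr a s q)).
  auto. intros; rewrite E2; auto. intros; rewrite E1; auto.
Qed.

Lemma delta_kk_i i : (i < k)%nat -> delta i k = 0.
Proof. intros; apply delta_neq; lia. Qed.
Lemma delta_k_i i : (i < k)%nat -> delta k i = 0.
Proof. intros; apply delta_neq; lia. Qed.

Lemma Xfull_lt s i : (i < k)%nat -> Xfull n Rr a s i = s i.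
Proof. intros. unfold Xfull. destruct (Nat.ltb_spec i k); [auto|lia]. Qed.
Lemma Xfull_k s : Xfull n Rr a s k = Rr + a.
Proof. unfold Xfull. destruct (Nat.ltb_spec k k); [lia|]. rewrite Nat.eqb_refl; auto. Qed.

Lemma Omh_X s i p : (i < k)%nat -> (p < n)%nat ->
  rsum n (fun q => Omh n Rr i p q * Xfull n Rr a s q) = / Rr * (delta p k * s i - delta p i * (Rr + a)).
Proof.
  intros Hi Hp. unfold Omh.
  rewrite (rsum_ext n _ (fun q => delta q i * (/Rr * delta p k * Xfull n Rr a s q) + delta q k * (- /Rr * delta p i * Xfull n Rr a s q))).
  rewrite rsum_delta2 by auto. rewrite Xfull_lt, Xfull_k by auto. ring.
  intros; ring.
Qed.

Lemma u_hor s i p : (i < k)%nat -> (p < n)%nat ->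
  Vfull n (fun j => delta j i) p + rsum n (fun q => Omh n Rr i p q * Xfull n Rr a s q)
  = -(a / Rr) * delta p i + (s i / Rr) * delta p k.
Proof.
  intros Hi Hp. rewrite Omh_X by auto. unfold Vfull.
  destruct (lt_n_cases p Hp) as [Hl| ->].
  - destruct (Nat.ltb_spec p k); [|lia]. rewrite delta_kk_i by auto. field; lra.
  - destruct (Nat.ltb_spec k k); [lia|]. rewrite (delta_k_i i) by auto. rewrite delta_refl. field; lra.
Qed.

Definition Dd i := J i i + J k k + m * a ^ 2.

Lemma Kmat_eq s i j : (i < k)%nat -> (j < k)%nat ->
  Kmat n J m Rr a s i j = (Dd i * delta i j + m * s i * s j) / Rr ^ 2.
Proof.
  intros Hi Hj. unfold Kmat, base, hor. simpl.
  rewrite (metric_eq s _ _ _ _ (Omh n Rr i) (Omh n Rr j)).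
  2,3: intros; rewrite mtr_idm_mul, idm_mul by auto; auto.
  rewrite (rsum_ext n (fun p => (_ + _) * (_ + _)) (fun p => delta p i * (-(a/Rr) * (-(a / Rr) * delta p j + (s j / Rr) * delta p k))
      + delta p k * (s i / Rr * (-(a / Rr) * delta p j + (s j / Rr) * delta p k)))).
  2: { intros p Hp. rewrite !u_hor by auto. ring. }
  rewrite rsum_delta2 by auto.
  rewrite (rsum_ext n (fun p => rsum n _) (fun p => rsum n (fun l => delta l i * ((J p p + J l l) * / Rr * delta p k * (/ Rr * (delta l k * delta p j - delta l j * delta p k)))
     + delta l k * (-(J p p + J l l) * / Rr * delta p i * (/ Rr * (delta l k * delta p j - delta l j * delta p k)))))).
  2: { intros p Hp. apply rsum_ext. intros l Hl. unfold Omh. ring. }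
  rewrite (rsum_ext n (fun p => rsum n _) (fun p => delta p k * (- (J p p + J i i) / Rr^2 * delta i j * delta p k)
     + delta p i * (- (J p p + J k k) / Rr ^2 * delta p j))).
  2: { intros p Hp. rewrite rsum_delta2 by auto. rewrite (delta_kk_i i), (delta_k_i j), delta_refl by auto. field; lra. }
  rewrite rsum_delta2 by auto. rewrite !delta_refl, (delta_kk_i i), (delta_k_i j) by auto. unfold Dd. field; lra.
Qed.

Definition Wb i j p q := - / Rr ^ 2 * (delta p i * delta q j - delta p j * delta q i).

Lemma OmOm i j p q : (i < k)%nat -> (j < k)%nat -> (p < n)%nat -> (q < n)%nat ->
  rsum n (fun l => Omh n Rr i p l * Omh n Rr j l q) =
  - / Rr ^ 2 * (delta i j * delta p k * delta q k + delta p i * delta q j).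
Proof.
  intros. unfold Omh.
  rewrite (rsum_ext n _ (fun l => delta l i * (/ Rr * delta p k * (/ Rr * (delta l k * delta q j - delta l j * delta q k)))
     + delta l k * (- / Rr * delta p i * (/ Rr * (delta l k * delta q j - delta l j * delta q k))))).
  rewrite rsum_delta2 by auto. rewrite (delta_kk_i i), (delta_k_i j), delta_refl by auto. field; lra.
  intros; ring.
Qed.

Lemma br_fst s i j : fst (bracket (hor n Rr i) (hor n Rr j) (base s)) = fun _ => 0.
Proof.
  apply functional_extensionality; intros q. simpl.
  rewrite !(Dr_eq _ _ 0) by apply D_const. ring.
Qed.

Lemma br_snd s i j p q : (i < k)%nat -> (j < k)%nat -> (p < n)%nat -> (q < n)%nat ->
  snd (bracket (hor n Rr i) (hor n Rr j) (base s)) p q = Wb i j p q.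
Proof.
  intros Hi Hj Hp Hq. simpl. unfold mmul at 1 3.
  assert (DD: forall i' j', derivable_pt_lim (fun e => rsum n (fun l => (idm p l + e * mmul n idm (Omh n Rr i') p l) * Omh n Rr j' l q)) 0
     (rsum n (fun l => mmul n idm (Omh n Rr i') p l * Omh n Rr j' l q))).
  { intros i' j'. apply D_rsum; intros l Hl.
    apply (D_ext (fun t => idm p l * Omh n Rr j' l q + t * (mmul n idm (Omh n Rr i') p l * Omh n Rr j' l q))); [intros; ring | apply D_lin]. }
  rewrite (Dr_eq _ _ _ (DD i j)). rewrite (Dr_eq _ _ _ (DD j i)).
  rewrite (rsum_ext n (fun l => mmul n idm (Omh n Rr i) p l * _) (fun l => Omh n Rr i p l * Omh n Rr j l q)).
  rewrite (rsum_ext n (fun l => mmul n idm (Omh n Rr j) p l * _) (fun l => Omh n Rr j p l * Omh n Rr i l q)).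
  rewrite !OmOm by auto. unfold Wb. rewrite (delta_sym j i). ring.
  intros; rewrite idm_mul; auto. intros; rewrite idm_mul; auto.
Qed.

Lemma metric_br s i j L : (i < k)%nat -> (j < k)%nat -> (L < k)%nat ->
  metric n J m Rr a (base s) (bracket (hor n Rr i) (hor n Rr j) (base s)) (hor n Rr L (base s))
  = m * a / Rr ^ 3 * (delta i L * s j - delta j L * s i).
Proof.
  intros Hi Hj HL.
  assert (Hs := fun p q => br_snd s i j p q Hi Hj).
  assert (Hf := br_fst s i j).
  set (b := bracket (hor n Rr i) (hor n Rr j) (base s)) in *. clearbody b.
  replace b with (fst b, snd b) by (destruct b; auto). rewrite Hf.
  unfold base, hor; simpl.
  rewrite (metric_eq s _ _ _ _ (Wb i j) (Omh n Rr L)).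
  2: { intros; rewrite mtr_idm_mul by auto. apply Hs; auto. }
  2: { intros; rewrite mtr_idm_mul, idm_mul by auto; auto. }
  rewrite (rsum_ext n (fun p => (_ + _) * (_ + _)) (fun p => delta p i * (- / Rr ^ 2 * s j * (-(a / Rr) * delta p L + (s L / Rr) * delta p k))
      + delta p j * (/ Rr ^ 2 * s i * (-(a / Rr) * delta p L + (s L / Rr) * delta p k)))).
  2: { intros p Hp. rewrite u_hor by auto.
       rewrite (rsum_ext n (fun q => Wb i j p q * _) (fun q => delta q j * (- / Rr ^ 2 * delta p i * Xfull n Rr a s q)
          + delta q i * (/ Rr ^ 2 * delta p j * Xfull n Rr a s q))).
       rewrite rsum_delta2 by auto. rewrite !Xfull_lt by auto.
       replace (Vfull n (fun _ => 0) p) with 0 by (unfold Vfull; destruct (Nat.ltb p k); auto).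
       ring.
       intros; unfold Wb; ring. }
  rewrite rsum_delta2 by auto.
  rewrite (rsum_ext n (fun p => rsum n _) (fun p => rsum n (fun l => delta l j * ((J p p + J l l) * (- / Rr ^ 2) * delta p i * Omh n Rr L l p)
     + delta l i * ((J p p + J l l) * (/ Rr ^ 2) * delta p j * Omh n Rr L l p)))).
  2: { intros p Hp. apply rsum_ext. intros l Hl. unfold Wb. ring. }
  rewrite (rsum_ext n (fun p => rsum n _) (fun p => delta p i * ((J p p + J j j) * (- / Rr ^ 2) * (- / Rr * delta j L * delta p k))
     + delta p j * ((J p p + J i i) * (/ Rr ^ 2) * (- / Rr * delta i L * delta p k)))).
  2: { intros p Hp. rewrite rsum_delta2 by auto. unfold Omh. rewrite (delta_kk_i i), (delta_kk_i j) by auto. ring. }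
  rewrite rsum_delta2 by auto. rewrite (delta_kk_i i), (delta_kk_i j) by auto.
  field; lra.
Qed.

Hypothesis Hpos : forall i, (i < n)%nat -> 0 < J i i.

Lemma Dd_pos i : (i < k)%nat -> 0 < Dd i.
Proof. intros. unfold Dd. assert (0 < J i i) by auto. assert (0 < J k k) by auto.
  assert (0 <= m * a^2) by (apply Rmult_le_pos; [lra| apply pow2_ge_0]). lra. Qed.

Definition rho (s : vec) := 1 + m * rsum k (fun l => s l * s l / Dd l).
Lemma rho_ge1 s : 1 <= rho s.
Proof. unfold rho. assert (0 <= rsum k (fun l => s l * s l / Dd l)).
  apply rsum_nonneg. intros l Hl. assert (0 < Dd l) by (apply Dd_pos; auto).
  unfold Rdiv. apply Rmult_le_pos. nra. apply Rlt_le, Rinv_0_lt_compat; auto.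
  nra. Qed.
Lemma rho_nz s : rho s <> 0. Proof. assert (H := rho_ge1 s). lra. Qed.

Definition Ki (s : vec) i j := Rr ^ 2 * (delta i j / Dd i - m * s i * s j / (Dd i * Dd j * rho s)).

Lemma Ki_sym s i j : Ki s i j = Ki s j i.
Proof. unfold Ki. rewrite delta_sym. destruct (Nat.eq_dec i j). subst; auto.
  rewrite delta_neq by auto. f_equal. f_equal. unfold Rdiv. ring. f_equal. ring. ring. Qed.

Lemma Kmat_sym s i j : (i < k)%nat -> (j < k)%nat -> Kmat n J m Rr a s i j = Kmat n J m Rr a s j i.
Proof. intros. rewrite !Kmat_eq by auto. rewrite delta_sym. destruct (Nat.eq_dec i j). subst; auto.
  rewrite delta_neq by auto. f_equal. ring. Qed.

Lemma K_Ki s i j : (i < k)%nat -> (j < k)%nat ->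
  rsum k (fun l => Kmat n J m Rr a s i l * Ki s l j) = delta i j.
Proof.
  intros Hi Hj. assert (Dj := Dd_pos j Hj). assert (Di := Dd_pos i Hi). assert (Hr := rho_nz s).
  rewrite (rsum_ext k _ (fun l => (delta l i * (Dd i * (delta l j / Dd l - m * s l * s j / (Dd l * Dd j * rho s)))
     + delta l j * (m * s i * s l / Dd l)) + (s l * s l / Dd l) * (- m * m * s i * s j / (Dd j * rho s)))).
  - rewrite !rsum_plus, !rsum_delta, rsum_scal_r by auto.
    replace (rsum k (fun l => s l * s l / Dd l)) with ((rho s - 1) / m) by (unfold rho; field; lra).
    field. lra.
  - intros l Hl. assert (Dl := Dd_pos l Hl). rewrite Kmat_eq by auto. unfold Ki. rewrite (delta_sym i l).
    field. repeat split; lra.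
Qed.

Lemma Ki_K s i j : (i < k)%nat -> (j < k)%nat ->
  rsum k (fun l => Ki s i l * Kmat n J m Rr a s l j) = delta i j.
Proof.
  intros. rewrite delta_sym. rewrite <- (K_Ki s j i) by auto.
  apply rsum_ext. intros. rewrite Ki_sym, Kmat_sym by auto. ring.
Qed.

Lemma Kinv_eq s i j : (i < k)%nat -> (j < k)%nat -> Kinv n J m Rr a s i j = Ki s i j.
Proof.
  intros Hi Hj. unfold Kinv.
  set (M := epsilon _ _).
  assert (HM : is_inv k (Kmat n J m Rr a s) M).
  { unfold M. apply epsilon_spec. exists (Ki s). intros i' j' ? ?. apply K_Ki; auto. }
  rewrite <- (rsum_delta k i (fun l => M l j)) by auto.
  rewrite (rsum_ext k _ (fun l => rsum k (fun q => Ki s i q * Kmat n J m Rr a s q l) * M l j)).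
  2: { intros l Hl. rewrite Ki_K by auto. rewrite delta_sym. auto. }
  rewrite (rsum_ext k _ (fun l => rsum k (fun q => Ki s i q * Kmat n J m Rr a s q l * M l j))).
  2: { intros. rewrite <- rsum_scal_r. auto. }
  rewrite rsum_swap.
  rewrite (rsum_ext k _ (fun q => delta q j * Ki s i q)).
  apply rsum_delta; auto.
  intros q Hq. rewrite (rsum_ext k _ (fun l => Ki s i q * (Kmat n J m Rr a s q l * M l j))) by (intros; ring).
  rewrite rsum_scal. rewrite HM by auto. ring.
Qed.

Notation st s i t := (upd s i (s i + t)) (only parsing).

Lemma rho_D s i : exists d, derivable_pt_lim (fun t => rho (st s i t)) 0 d.
Proof.
  unfold rho. eexists. apply (D_plus (fun _ => 1) (fun t => m * rsum k (fun l => st s i t l * st s i t l / Dd l))).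
  apply D_const. apply D_scal. apply (D_rsum k (fun l t => st s i t l * st s i t l / Dd l)).
  intros l Hl. apply (D_div (fun t => st s i t l * st s i t l) (fun _ => Dd l)).
  apply (D_mult (fun t => st s i t l) (fun t => st s i t l)); apply D_upd. apply D_const.
  assert (H := Dd_pos l Hl). lra.
Qed.

Lemma dK_ex s i j l : (j < k)%nat -> (l < k)%nat -> exists d, derivable_pt_lim (fun t => Ki (st s i t) j l) 0 d.
Proof.
  intros Hj Hl. destruct (rho_D s i) as [dr Hr]. unfold Ki. eexists.
  apply D_scal. apply (D_minus (fun _ => delta j l / Dd j)). apply D_const.
  apply (D_div (fun t => m * st s i t j * st s i t l) (fun t => Dd j * Dd l * rho (st s i t))).
  apply (D_mult (fun t => m * st s i t j) (fun t => st s i t l)). apply D_scal. apply D_upd. apply D_upd.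
  apply D_scal. apply Hr.
  assert (H1 := Dd_pos j Hj). assert (H2 := Dd_pos l Hl). assert (H3 := rho_nz (st s i 0)).
  apply Rmult_integral_contrapositive. split; [|auto]. apply Rmult_integral_contrapositive; split; lra.
Qed.

Definition dK i s j l := Dr (fun t => Ki (st s i t) j l) 0.
Lemma dK_spec s i j l : (j < k)%nat -> (l < k)%nat -> derivable_pt_lim (fun t => Ki (st s i t) j l) 0 (dK i s j l).
Proof. intros. unfold dK, Dr. apply epsilon_spec. apply dK_ex; auto. Qed.
Lemma dK_sym i s j l : dK i s j l = dK i s l j.
Proof. unfold dK. apply Dr_ext. intros; apply Ki_sym. Qed.

Definition HE s p := 1/2 * rsum k (fun i => rsum k (fun j => Ki s i j * p i * p j)).
Definition vE s p i := rsum k (fun l => Ki s i l * p l).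
Definition HdE i s p := 1/2 * rsum k (fun j => rsum k (fun l => dK i s j l * p j * p l)).
Definition CE s i j l := m * a / Rr ^ 3 * (Ki s l i * s j - Ki s l j * s i).
Definition GE s p i := rsum k (fun j => rsum k (fun l => CE s i j l * p l * vE s p j)).

Lemma Ham_eq s p : Ham n J m Rr a s p = HE s p.
Proof. unfold Ham, HE. f_equal. apply rsum_ext; intros. apply rsum_ext; intros. rewrite Kinv_eq; auto. Qed.

Lemma Cijk_eq s i j l : (i < k)%nat -> (j < k)%nat -> (l < k)%nat -> Cijk n J m Rr a s i j l = CE s i j l.
Proof.
  intros. unfold Cijk, CE.
  rewrite (rsum_ext k _ (fun q => delta q i * (m * a / Rr ^ 3 * Ki s l q * s j) + delta q j * (- (m * a / Rr ^ 3) * Ki s l q * s i))).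
  rewrite rsum_delta2 by auto. ring.
  intros q Hq. rewrite Kinv_eq, metric_br by auto. rewrite (delta_sym i q), (delta_sym j q). ring.
Qed.

Lemma sum_delta_row i (A : nat -> nat -> R) w : (i < k)%nat ->
  rsum k (fun j => rsum k (fun l => A j l * delta j i * w l)) = rsum k (fun l => A i l * w l).
Proof. intros. rewrite <- (rsum_delta k i (fun j => rsum k (fun l => A j l * w l))) by auto.
  apply rsum_ext; intros. rewrite <- rsum_scal. apply rsum_ext; intros. ring. Qed.

Lemma D_HE_p s p i c : (i < k)%nat ->
  derivable_pt_lim (fun t => HE s (fun j => c * st p i t j)) 0 (c * vE s (fun j => c * p j) i).
Proof.
  intros Hi. unfold HE. eapply D_eqv; [| apply D_scal; apply (D_qf k (fun _ => Ki s) (fun t j => c * st p i t j) (fun _ _ => 0) (fun j => c * delta j i))].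
  3: { intros. apply D_scal, D_upd. }
  2: { intros. apply D_const. }
  rewrite upd_0.
  rewrite (rsum_ext k _ (fun j => rsum k (fun l => Ki s j l * (c * delta j i) * (c * p l) + Ki s j l * (c * p j) * (c * delta l i))))
    by (intros; apply rsum_ext; intros; ring).
  rewrite qf_sym_sum by (intros; apply Ki_sym).
  unfold vE. rewrite <- (rsum_delta k i (fun j => c * rsum k (fun l => Ki s j l * (c * p l)))) by auto.
  rewrite <- Rmult_assoc. replace (1/2*2) with 1 by field. rewrite Rmult_1_l. apply rsum_ext; intros; ring.
Qed.

Lemma sdot_eq s p i : (i < k)%nat -> sdot n J m Rr a s p i = vE s p i.
Proof.
  intros Hi. unfold sdot, pdp.
  rewrite (Dr_ext _ (fun t => HE s (fun j => 1 * st p i t j))).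
  apply Dr_eq. eapply D_eqv; [| apply D_HE_p; auto]. unfold vE. rewrite Rmult_1_l. apply rsum_ext; intros; ring.
  intros t. rewrite Ham_eq. f_equal. apply functional_extensionality; intros; ring.
Qed.

Lemma pds_Ham s p i : (i < k)%nat -> pds i (Ham n J m Rr a) s p = HdE i s p.
Proof.
  intros Hi. unfold pds. rewrite (Dr_ext _ (fun t => HE (st s i t) p)) by (intros; apply Ham_eq).
  apply Dr_eq. unfold HE, HdE. apply D_scal.
  eapply D_eqv; [| apply (D_qf k (fun t => Ki (st s i t)) (fun _ => p) (dK i s) (fun _ => 0))].
  apply rsum_ext; intros; apply rsum_ext; intros; ring.
  intros; apply dK_spec; auto. intros; apply D_const.
Qed.

Lemma pdot_eq s p i : (i < k)%nat -> pdot n J m Rr a s p i = - HdE i s p - GE s p i.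
Proof.
  intros Hi. unfold pdot. rewrite pds_Ham by auto. unfold GE. f_equal.
  apply rsum_ext; intros j Hj; apply rsum_ext; intros l Hl. rewrite Cijk_eq, sdot_eq by auto. auto.
Qed.

Definition Q (s : vec) := rsum k (fun l => s l * s l).
Lemma D_Q s i : (i < k)%nat -> derivable_pt_lim (fun t => Q (st s i t)) 0 (2 * s i).
Proof.
  intros Hi. unfold Q. eapply D_eqv; [| apply (D_rsum k (fun l t => st s i t l * st s i t l) (fun l => 2 * s l * delta l i))].
  rewrite <- (rsum_delta k i (fun l => 2 * s l)) by auto. apply rsum_ext; intros; ring.
  intros l Hl. eapply D_eqv; [|apply (D_mult (fun t => st s i t l) (fun t => st s i t l)); apply D_upd].
  rewrite upd_comp. ring.
Qed.

Lemma D_vE_s s p i j : (j < k)%nat ->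
  derivable_pt_lim (fun t => vE (st s i t) p j) 0 (rsum k (fun l => dK i s j l * p l)).
Proof.
  intros Hj. unfold vE. apply (D_rsum k (fun l t => Ki (st s i t) j l * p l)). intros l Hl.
  eapply D_eqv; [| apply (D_mult (fun t => Ki (st s i t) j l) (fun _ => p l)); [apply dK_spec; auto| apply D_const]].
  ring.
Qed.

Lemma D_vE_p s p i j : (i < k)%nat ->
  derivable_pt_lim (fun t => vE s (st p i t) j) 0 (Ki s j i).
Proof.
  intros Hi. unfold vE. eapply D_eqv; [| apply (D_rsum k (fun l t => Ki s j l * st p i t l) (fun l => delta l i * Ki s j l))].
  apply rsum_delta; auto.
  intros l Hl. eapply D_eqv; [| apply D_scal, D_upd]. ring.
Qed.

Lemma D_HdE_p s p i : (i < k)%nat ->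
  derivable_pt_lim (fun t => HdE i s (st p i t)) 0 (rsum k (fun l => dK i s i l * p l)).
Proof.
  intros Hi. unfold HdE. eapply D_eqv; [| apply D_scal; apply (D_qf k (fun _ => dK i s) (fun t => st p i t) (fun _ _ => 0) (fun j => delta j i))].
  3: { intros. apply D_upd. }
  2: { intros. apply D_const. }
  rewrite upd_0.
  rewrite (rsum_ext k _ (fun j => rsum k (fun l => dK i s j l * delta j i * p l + dK i s j l * p j * delta l i)))
    by (intros; apply rsum_ext; intros; ring).
  rewrite qf_sym_sum by (intros; apply dK_sym).
  rewrite <- Rmult_assoc. replace (1/2*2) with 1 by field. rewrite Rmult_1_l.
  rewrite <- (rsum_delta k i (fun j => rsum k (fun l => dK i s j l * p l))) by auto.
  apply rsum_ext; intros; ring.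
Qed.

Lemma D_GE_p s p i : (i < k)%nat ->
  derivable_pt_lim (fun t => GE s (st p i t) i) 0
    (rsum k (fun j => rsum k (fun l => CE s i j l * delta l i * vE s p j + CE s i j l * p l * Ki s j i))).
Proof.
  intros Hi. unfold GE.
  apply (D_rsum k (fun j t => rsum k (fun l => CE s i j l * st p i t l * vE s (st p i t) j))). intros j Hj.
  apply (D_rsum k (fun l t => CE s i j l * st p i t l * vE s (st p i t) j)). intros l Hl.
  eapply D_eqv; [| apply (D_mult (fun t => CE s i j l * st p i t l) (fun t => vE s (st p i t) j));
     [apply D_scal, D_upd | apply D_vE_p; auto]].
  rewrite upd_0. ring.
Qed.

Lemma D_Ht_s s pt i cph : (i < k)%nat ->
  derivable_pt_lim (fun t => HE (st s i t) (vscale (exp (- (cph * Q (st s i t)))) pt)) 0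
   (HdE i s (vscale (exp (- (cph * Q s))) pt)
    + rsum k (fun j => (- (cph * (2 * s i))) * vscale (exp (- (cph * Q s))) pt j * vE s (vscale (exp (- (cph * Q s))) pt) j)).
Proof.
  intros Hi. unfold HE, vscale.
  set (E := exp (- (cph * Q s))).
  eapply D_eqv; [| apply D_scal; apply (D_qf k (fun t => Ki (st s i t)) (fun t j => exp (- (cph * Q (st s i t))) * pt j) (dK i s)
      (fun j => E * (- (cph * (2 * s i))) * pt j))].
  3: { intros j Hj. eapply D_eqv; [| apply (D_mult (fun t => exp (- (cph * Q (st s i t)))) (fun _ => pt j));
        [apply D_exp; apply (D_ext (fun t => - 1 * (cph * Q (st s i t)))); [intros; ring|apply D_scal, D_scal, D_Q; auto] | apply D_const]].
       cbv beta. rewrite upd_0. unfold E. ring. }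
  2: { intros; apply dK_spec; auto. }
  rewrite upd_0. fold E.
  rewrite (rsum_ext k _ (fun j => rsum k (fun l => dK i s j l * (E * pt j) * (E * pt l)) +
      rsum k (fun l => Ki s j l * (E * (- (cph * (2 * s i))) * pt j) * (E * pt l) + Ki s j l * (E * pt j) * (E * (- (cph * (2 * s i))) * pt l))))
    by (intros; rewrite <- rsum_plus; apply rsum_ext; intros; ring).
  rewrite rsum_plus. rewrite qf_sym_sum by (intros; apply Ki_sym).
  unfold HdE, vE. rewrite Rmult_plus_distr_l. f_equal.
  rewrite <- Rmult_assoc. replace (1/2*2) with 1 by field. rewrite Rmult_1_l.
  apply rsum_ext; intros. ring.
Qed.

Lemma CEp s p i j : (i < k)%nat -> (j < k)%nat ->
  rsum k (fun l => CE s i j l * p l) = m * a / Rr ^ 3 * (vE s p i * s j - vE s p j * s i).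
Proof.
  intros. unfold CE, vE. rewrite <- !rsum_scal_r, <- rsum_minus, <- rsum_scal.
  apply rsum_ext; intros l Hl. rewrite (Ki_sym s l i), (Ki_sym s l j). ring.
Qed.

Definition SV s p := rsum k (fun j => s j * vE s p j).
Definition VV s p := rsum k (fun j => vE s p j * vE s p j).

Lemma GE_alt s p i : (i < k)%nat -> GE s p i = m * a / Rr ^ 3 * (vE s p i * SV s p - s i * VV s p).
Proof.
  intros Hi. unfold GE, SV, VV.
  rewrite (rsum_ext k _ (fun j => rsum k (fun l => CE s i j l * p l) * vE s p j)).
  2: { intros. rewrite <- rsum_scal_r. auto. }
  rewrite (rsum_ext k _ (fun j => m * a / Rr ^ 3 * (vE s p i * (s j * vE s p j) - s i * (vE s p j * vE s p j)))).
  2: { intros. rewrite CEp by auto. ring. }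
  rewrite rsum_scal, rsum_minus, !rsum_scal. auto.
Qed.

Lemma p_from_v s p i : (i < k)%nat -> rsum k (fun l => Kmat n J m Rr a s i l * vE s p l) = p i.
Proof.
  intros Hi. unfold vE.
  rewrite (rsum_ext k _ (fun l => rsum k (fun q => Kmat n J m Rr a s i l * Ki s l q * p q))).
  2: { intros. rewrite <- rsum_scal. apply rsum_ext; intros; ring. }
  rewrite rsum_swap. rewrite (rsum_ext k _ (fun q => delta q i * p q)). apply rsum_delta; auto.
  intros q Hq. rewrite rsum_scal_r. rewrite K_Ki by auto. rewrite delta_sym; ring.
Qed.

Hypothesis Hcase : a = 0 \/ (forall i, (i < k)%nat -> Dd i = Dd 0).
Definition c0 := m * a / (Rr * Dd 0).
Lemma k_pos : (0 < k)%nat. Proof. unfold r; lia. Qed.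
Lemma D0_pos : 0 < Dd 0. Proof. apply Dd_pos, k_pos. Qed.

Section ConstD.
Hypothesis HD : forall i, (i < k)%nat -> Dd i = Dd 0.
Notation D := (Dd 0).

Lemma rho_const s : rho s = 1 + m * Q s / D.
Proof. unfold rho, Q. rewrite (rsum_ext k _ (fun l => s l * s l * / D)). rewrite rsum_scal_r. unfold Rdiv; ring.
  intros. rewrite HD; auto. Qed.

Lemma Ki_const s i j : (i < k)%nat -> (j < k)%nat -> Ki s i j = Rr ^ 2 * (delta i j / D - m * s i * s j / (D * D * rho s)).
Proof. intros. unfold Ki. rewrite (HD i), (HD j) by auto. reflexivity. Qed.

Lemma trKi s : rsum k (fun i => Ki s i i) = Rr ^ 2 * (INR k / D - m * Q s / (D * D * rho s)).
Proof.
  assert (H0 := D0_pos). assert (H1 := rho_nz s).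
  rewrite (rsum_ext k _ (fun i => Rr ^ 2 / D + (s i * s i) * (- Rr ^ 2 * m / (D * D * rho s)))).
  rewrite rsum_plus, rsum_const, rsum_scal_r. fold (Q s). field. split; lra.
  intros. rewrite Ki_const, delta_refl by auto. field. split; lra.
Qed.

Lemma Kis s j : (j < k)%nat -> rsum k (fun i => Ki s i j * s i) = Rr ^ 2 * (1 / D - m * Q s / (D * D * rho s)) * s j.
Proof.
  intros Hj. assert (H0 := D0_pos). assert (H1 := rho_nz s).
  rewrite (rsum_ext k _ (fun i => delta i j * (Rr ^ 2 / D * s i) + (s i * s i) * (- Rr ^ 2 * m * s j / (D * D * rho s)))).
  rewrite rsum_plus, rsum_delta, rsum_scal_r by auto. fold (Q s). field. split; lra.
  intros. rewrite Ki_const by auto. field. split; lra.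
Qed.
End ConstD.

Lemma div_inner s p i : (i < k)%nat ->
  rsum k (fun j => rsum k (fun l => CE s i j l * delta l i * vE s p j + CE s i j l * p l * Ki s j i))
  = rsum k (fun j => CE s i j i * vE s p j) + rsum k (fun j => m * a / Rr ^ 3 * (vE s p i * s j - vE s p j * s i) * Ki s j i).
Proof.
  intros Hi. rewrite <- rsum_plus. apply rsum_ext; intros j Hj. rewrite rsum_plus.
  rewrite <- CEp by auto. rewrite <- rsum_scal_r. f_equal.
  rewrite <- (rsum_delta k i (fun l => CE s i j l * vE s p j)) by auto. apply rsum_ext; intros; ring.
Qed.

Lemma div_alg s p :
  rsum k (fun i => (INR k - 1) * c0 / 2 * (2 * s i) * vE s p i -
     rsum k (fun j => rsum k (fun l => CE s i j l * delta l i * vE s p j + CE s i j l * p l * Ki s j i))) = 0.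
Proof.
  rewrite (rsum_ext k _ (fun i => (INR k - 1) * c0 / 2 * (2 * s i) * vE s p i -
     (rsum k (fun j => CE s i j i * vE s p j) + rsum k (fun j => m * a / Rr ^ 3 * (vE s p i * s j - vE s p j * s i) * Ki s j i))))
   by (intros; rewrite div_inner; auto).
  destruct Hcase as [Ha | HD].
  - rewrite <- (rsum_0 k). apply rsum_ext; intros i Hi. unfold c0, CE. rewrite Ha.
    rewrite (rsum_ext k (fun j => m * 0 / Rr ^ 3 * (Ki s i i * s j - Ki s i j * s i) * vE s p j) (fun _ => 0)) by (intros; field; lra). rewrite (rsum_ext k (fun j => _ * _ * Ki s j i) (fun _ => 0)) by (intros; field; lra).
    rewrite rsum_0. assert (H0 := D0_pos). field. lra.
  - rewrite !rsum_minus, rsum_plus.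
    rewrite (rsum_antisym k (fun i j => m * a / Rr ^ 3 * (vE s p i * s j - vE s p j * s i) * Ki s j i)).
    2: { intros. rewrite Ki_sym. ring. }
    rewrite (rsum_ext k (fun i => _ * (2 * s i) * _) (fun i => (INR k - 1) * c0 * (s i * vE s p i))) by (intros; field).
    rewrite rsum_scal. fold (SV s p).
    rewrite (rsum_ext k (fun i => rsum k (fun j => CE s i j i * _)) (fun i => m * a / Rr ^ 3 * (Ki s i i * SV s p - rsum k (fun j => Ki s i j * s i * vE s p j)))).
    2: { intros i Hi. unfold SV, CE. rewrite <- rsum_scal, <- rsum_minus. rewrite <- rsum_scal. apply rsum_ext; intros; ring. }
    rewrite rsum_scal, rsum_minus, rsum_scal_r, rsum_swap.
    rewrite (rsum_ext k (fun j => rsum k (fun i => Ki s i j * s i * vE s p j)) (fun j => Rr ^ 2 * (1 / Dd 0 - m * Q s / (Dd 0 * Dd 0 * rho s)) * (s j * vE s p j))).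
    2: { intros j Hj. rewrite rsum_scal_r.
         rewrite Kis by auto. ring. }
    rewrite rsum_scal, trKi by auto. fold (SV s p). unfold c0.
    assert (H0 := D0_pos). assert (H1 := rho_nz s). field. repeat split; lra.
Qed.

Lemma p_explicit s p i : (i < k)%nat -> (forall i, (i < k)%nat -> Dd i = Dd 0) ->
  p i = (Dd 0 * vE s p i + m * s i * SV s p) / Rr ^ 2.
Proof.
  intros Hi HD. rewrite <- (p_from_v s p i) by auto.
  rewrite (rsum_ext k _ (fun l => delta l i * (Dd 0 * vE s p l / Rr ^ 2) + (s l * vE s p l) * (m * s i / Rr ^ 2))).
  rewrite rsum_plus, rsum_delta, rsum_scal_r by auto. unfold SV. field. lra.
  intros l Hl. rewrite Kmat_eq by auto. rewrite HD by auto. rewrite delta_sym. field. lra.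
Qed.

Lemma ham_alg s p i : (i < k)%nat ->
  rsum k (fun j => c0 * s j * vE s p j) * p i + (- HdE i s p - GE s p i)
  = - (HdE i s p + rsum k (fun j => - (c0 / 2 * (2 * s i)) * p j * vE s p j)).
Proof.
  intros Hi. rewrite GE_alt by auto.
  rewrite (rsum_ext k (fun j => c0 * s j * vE s p j) (fun j => c0 * (s j * vE s p j))) by (intros; ring).
  rewrite (rsum_ext k (fun j => - (c0 / 2 * (2 * s i)) * p j * vE s p j) (fun j => - (c0 * s i) * (p j * vE s p j))) by (intros; field).
  rewrite !rsum_scal. fold (SV s p).
  assert (H0 := D0_pos).
  destruct Hcase as [Ha | HD].
  - unfold c0. rewrite Ha. field. lra.
  - rewrite (rsum_ext k (fun j => p j * vE s p j) (fun j => Dd 0 / Rr ^ 2 * (vE s p j * vE s p j) + m * SV s p / Rr ^ 2 * (s j * vE s p j))).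
    2: { intros j Hj. rewrite (p_explicit s p j) by auto. field. lra. }
    rewrite rsum_plus, !rsum_scal. fold (SV s p) (VV s p).
    rewrite (p_explicit s p i) by auto. unfold c0. field. lra.
Qed.

Definition sig0 := (INR k - 1) * c0 / 2.

Lemma inv_main : invariant_measure n J m Rr a (fun s => sig0 * Q s).
Proof.
  unfold invariant_measure. intros s p.
  rewrite (rsum_ext k _ (fun i => exp (sig0 * Q s) * (sig0 * (2 * s i) * vE s p i - rsum k (fun j => rsum k (fun l => CE s i j l * delta l i * vE s p j + CE s i j l * p l * Ki s j i))))).
  rewrite rsum_scal. unfold sig0. rewrite div_alg. ring.
  intros i Hi. unfold pds, pdp.
  rewrite (Dr_ext (fun t => exp (sig0 * Q (st s i t)) * sdot n J m Rr a (st s i t) p i) (fun t => exp (sig0 * Q (st s i t)) * vE (st s i t) p i))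
    by (intros; rewrite sdot_eq; auto).
  rewrite (Dr_ext (fun t => exp (sig0 * Q s) * pdot n J m Rr a s (st p i t) i) (fun t => exp (sig0 * Q s) * (- HdE i s (st p i t) - GE s (st p i t) i)))
    by (intros; rewrite pdot_eq; auto).
  rewrite (Dr_eq _ _ (exp (sig0 * Q s) * (sig0 * (2 * s i)) * vE s p i + exp (sig0 * Q s) * rsum k (fun l => dK i s i l * p l))).
  rewrite (Dr_eq _ _ (exp (sig0 * Q s) * (- rsum k (fun l => dK i s i l * p l) - rsum k (fun j => rsum k (fun l => CE s i j l * delta l i * vE s p j + CE s i j l * p l * Ki s j i))))).
  ring.
  - apply D_scal. apply D_minus. apply D_opp. apply D_HdE_p; auto. apply D_GE_p; auto.
  - eapply D_eqv; [| apply (D_mult (fun t => exp (sig0 * Q (st s i t))) (fun t => vE (st s i t) p i));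
      [apply D_exp, D_scal, D_Q; auto | apply D_vE_s; auto]].
    cbv beta. rewrite upd_0. auto.
Qed.

Lemma ham_main : chaplygin_hamiltonisation n J m Rr a (fun s => c0 / 2 * Q s).
Proof.
  split. apply quad_smooth.
  cbv zeta. intros s pt. split.
  - intros i Hi. rewrite sdot_eq by auto. unfold pdp.
    rewrite (Dr_ext _ (fun t => HE s (fun j => exp (- (c0 / 2 * Q s)) * st pt i t j))).
    rewrite (Dr_eq _ _ _ (D_HE_p s pt i _ Hi)). unfold vscale. auto.
    intros t. rewrite Ham_eq. unfold vscale. auto.
  - intros i Hi. rewrite pdot_eq by auto. unfold pds.
    rewrite (Dr_ext _ (fun t => HE (st s i t) (vscale (exp (- (c0 / 2 * Q (st s i t)))) pt))) by (intros; apply Ham_eq).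
    rewrite (Dr_eq _ _ _ (D_Ht_s s pt i (c0 / 2) Hi)).
    rewrite (rsum_ext k _ (fun j => c0 * s j * vE s (vscale (exp (- (c0 / 2 * Q s))) pt) j)).
    apply ham_alg; auto.
    intros j Hj. rewrite sdot_eq by auto. unfold pd.
    rewrite (Dr_eq _ _ _ (D_scal (c0 / 2) _ _ _ (D_Q s j Hj))). field.
Qed.
End Model.


Theorem mainTheorem6 (n : nat) (Rr a m : R) (J : mat) :
  (3 <= n)%nat -> 0 < Rr -> 0 < m -> sym_pd n J ->
  ((is_diag n J /\ a = 0) \/
   (is_diag n J /\ forall i, (i < n - 1)%nat -> J i i = J 0%nat 0%nat)) ->
  (exists sigma : vec -> R,
     smooth (r n) sigma /\ invariant_measure n J m Rr a sigma) /\
  (exists phi : vec -> R, chaplygin_hamiltonisation n J m Rr a phi).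
Proof.
  intros Hn HR Hm [Hsym Hpd] Hc.
  assert (Hdiag : is_diag n J) by (destruct Hc as [[? ?]|[? ?]]; auto).
  assert (Hpos : forall i, (i < n)%nat -> 0 < J i i).
  { intros i Hi. specialize (Hpd (fun q => delta q i)).
    rewrite (rsum_ext n _ (fun i0 => delta i0 i * J i0 i)) in Hpd.
    rewrite rsum_delta in Hpd by auto. apply Hpd. exists i. split; auto. rewrite delta_refl. lra.
    intros i0 Hi0. rewrite (rsum_ext n _ (fun j => delta j i * (delta i0 i * J i0 j))).
    apply rsum_delta; auto. intros; ring. }
  assert (Hcase : a = 0 \/ (forall i, (i < r n)%nat -> Dd n J m a i = Dd n J m a 0)).
  { destruct Hc as [[_ Ha]|[_ HJ]]. left; auto. right. intros i Hi. unfold Dd.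
    unfold r in *. rewrite (HJ i) by lia. auto. }
  split.
  - exists (fun s => sig0 n J m Rr a * Q n s). split.
    + apply quad_smooth.
    + apply inv_main; auto.
  - exists (fun s => c0 n J m Rr a / 2 * Q n s). apply ham_main; auto.
Qed.
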